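(* Let $\Sigma=\{s_0,s_1,\dots,s_{\sigma-1}\}$ be an ordered alphabet of size $\sigma\ge 1$ with $s_0<s_1<\cdots<s_{\sigma-1}$, and let $k_0,\dots,k_{\sigma-1}$ be integers with $k_i>1$ for all $i$. Let $$K=s_{\sigma-1}^{k_{\sigma-1}}\,s_{\sigma-2}^{k_{\sigma-2}}\cdots s_1^{k_1}\,s_0^{k_0}.$$ Then a smallest suffixient set for $K\$$ has size $\chi(K)=2\sigma$.
   Context: Strings are $0$-indexed; $w[i..j]$ denotes the substring from position $i$ to $j$ inclusive. $\$\notin\Sigma$ is an end-marker smaller than every letter of $\Sigma$, occurring only at the end of $K\$$; substrings of $K\$$ are words over $\Sigma\cup\{\$\}$. For a string $v$, a substring $x$ of $v$ (possibly empty) is right-maximal if there are two distinct letters $a\ne b$ such that both $xa$ and $xb$ are substrings of $v$; the words $xa$ that are substrings of $v$, for right-maximal $x$, are called right-extensions of $v$. A set $S$ of positions of $v$ is suffixient for $v$ if every right-extension $x$ of $v$ is a suffix of $v[0..j]$ for some $j\in S$. $\chi(K)$ denotes the minimum size of a suffixient set for $K\$$. *)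

(* Defs.v *)
From mathcomp Require Import all_boot.
Set Implicit Arguments. Unset Strict Implicit. Unset Printing Implicit Defensive.

Section Suff.
Variable T : eqType.

Definition right_maximal (v x : seq T) : Prop :=
  exists a b : T, a != b /\ infix (rcons x a) v /\ infix (rcons x b) v.

Definition right_extension (v y : seq T) : Prop :=
  exists (x : seq T) (a : T), y = rcons x a /\ right_maximal v x /\ infix y v.

Definition suffixient (v : seq T) (S : {set 'I_(size v)}) : Prop :=
  forall y, right_extension v y ->
    exists2 j : 'I_(size v), j \in S & suffix y (take j.+1 v).
End Suff.

(* Alphabet: letter s_i is encoded as the natural number i.+1 (so s_0 < s_1 < ...),
   and the end-marker $ is encoded as 0, smaller than every letter. *)
Definition sym (i : nat) : nat := i.+1.
Definition endmarker : nat := 0.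

Definition Kword (sigma : nat) (k : nat -> nat) : seq nat :=
  flatten [seq nseq (k i) (sym i) | i <- rev (iota 0 sigma)].

Definition Kdollar (sigma : nat) (k : nat -> nat) : seq nat :=
  rcons (Kword sigma k) endmarker.

(* Main.v *)
Require Import Defs.
From mathcomp Require Import all_boot zify.

Definition st (sigma : nat) (k : nat -> nat) (i : nat) := \sum_(i <= j < sigma) k j.

Lemma st_ge sigma k i : sigma <= i -> st sigma k i = 0.
Proof. by move=> h; rewrite /st big_geq. Qed.

Lemma st_step sigma k i : i < sigma -> st sigma k i = k i + st sigma k i.+1.
Proof. by move=> h; rewrite /st big_ltn. Qed.

Lemma st_S sigma k i : i <= sigma -> st sigma.+1 k i = st sigma k i + k sigma.
Proof. by move=> h; rewrite /st big_nat_recr. Qed.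

Lemma st_mono sigma k i d : st sigma k (i + d) <= st sigma k i.
Proof.
elim: d => [|d IH]; first by rewrite addn0.
apply: leq_trans IH; rewrite addnS.
case: (ltnP (i + d) sigma) => h.
  by rewrite (st_step _ _ _ h) leq_addl.
by rewrite st_ge // ltnW.
Qed.

Lemma st_monoT sigma k i i' : i <= i' -> st sigma k i' <= st sigma k i.
Proof. by move=> h; rewrite -(subnKC h) st_mono. Qed.

Lemma KwordS sigma k : Kword sigma.+1 k = nseq (k sigma) (sym sigma) ++ Kword sigma k.
Proof. by rewrite /Kword -addn1 iotaD rev_cat /= add0n. Qed.

Lemma size_Kword sigma k : size (Kword sigma k) = st sigma k 0.
Proof.
elim: sigma => [|s IH]; first by rewrite st_ge.
by rewrite KwordS size_cat size_nseq IH st_S // addnC.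
Qed.

Lemma nth_Kword sigma k p : p < st sigma k 0 ->
  exists2 i, i < sigma & (st sigma k i.+1 <= p < st sigma k i) && (nth 0 (Kword sigma k) p == sym i).
Proof.
elim: sigma p => [|s IH] p Hp; first by rewrite st_ge in Hp.
rewrite KwordS nth_cat size_nseq.
case: (ltnP p (k s)) => hp.
  exists s => //; rewrite (st_ge _ _ _ (leqnn _)) st_S // (st_ge _ _ _ (leqnn _)) nth_nseq hp /=.
  by rewrite eqxx /=; lia.
rewrite st_S // in Hp.
have [i hi /andP[/andP[h1 h2] h3]] := IH (p - k s) ltac:(lia).
exists i; first exact: ltnW.
rewrite !st_S // ?(ltnW hi) //.
rewrite h3 andbT; apply/andP; split; lia.
Qed.

Lemma nseqSr (n : nat) (x : nat) : nseq n.+1 x = rcons (nseq n x) x.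
Proof. by elim: n => //= n <-. Qed.

Lemma suffix_occ (y w : seq nat) e : e <= size w ->
  suffix y (take e w) <->
  (size y <= e /\ forall t, t < size y -> nth 0 y t = nth 0 w (e - size y + t)).
Proof.
move=> he; split.
  case/suffixP=> s hs.
  have hsz : size s + size y = e by rewrite -size_cat -hs size_takel.
  split; first lia.
  move=> t ht; rewrite -(@nth_take e _ _ (e - size y + t)); last lia.
  by rewrite hs nth_cat ifF; [congr nth; rewrite -hsz addnK addKn | rewrite -hsz addnK ltnNge leq_addr].
case=> h1 h2; apply/suffixP.
exists (take (e - size y) (take e w)).
rewrite -{1}(cat_take_drop (e - size y) (take e w)); congr cat.
apply: (@eq_from_nth nat 0).
  by rewrite size_drop size_takel //; lia.
move=> t; rewrite size_drop size_takel // => ht.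
by rewrite nth_drop nth_take ?h2 //; lia.
Qed.

Lemma infix_occ (y w : seq nat) : infix y w -> exists2 e, e <= size w & suffix y (take e w).
Proof.
case/infixP=> s [s' ->]; exists (size s + size y).
  by rewrite !size_cat addnA leq_addr.
by rewrite catA take_size_cat ?size_cat // suffix_suffix.
Qed.

Lemma occ_infix (y w : seq nat) e : suffix y (take e w) -> infix y w.
Proof.
move=> h; apply: (suffix_infix_trans h); apply: prefixW.
by apply/prefixP; exists (drop e w); rewrite cat_take_drop.
Qed.

Lemma size_Kd sigma k : size (Kdollar sigma k) = (st sigma k 0).+1.
Proof. by rewrite /Kdollar size_rcons size_Kword. Qed.

Lemma nth_Kd_N sigma k : nth 0 (Kdollar sigma k) (st sigma k 0) = 0.
Proof. by rewrite /Kdollar nth_rcons size_Kword ltnn eqxx. Qed.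

Lemma nth_Kd_lt sigma k p : p < st sigma k 0 ->
  exists2 i, i < sigma & (st sigma k i.+1 <= p < st sigma k i) && (nth 0 (Kdollar sigma k) p == sym i).
Proof.
move=> hp; rewrite /Kdollar nth_rcons size_Kword hp; exact: nth_Kword.
Qed.

Lemma nth_Kd_block sigma k i p : i < sigma -> st sigma k i.+1 <= p < st sigma k i ->
  nth 0 (Kdollar sigma k) p = sym i.
Proof.
move=> hi /andP[h1 h2].
have hp : p < st sigma k 0 by apply: leq_trans h2 (st_monoT _ _ _ _ (leq0n i)).
have [i' hi' /andP[/andP[h1' h2'] /eqP ->]] := nth_Kd_lt _ _ _ hp.
case: (ltngtP i i') => // hii.
  have := st_monoT sigma k _ _ hii; lia.
have := st_monoT sigma k _ _ hii; lia.
by rewrite hii.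
Qed.

Lemma nth_Kd_letter sigma k i q : nth 0 (Kdollar sigma k) q = sym i ->
  i < sigma /\ st sigma k i.+1 <= q < st sigma k i.
Proof.
move=> hq.
case: (ltngtP q (st sigma k 0)) => h.
- have [i' hi' /andP[hb /eqP]] := nth_Kd_lt _ _ _ h.
  rewrite hq => [[->]]; split => //.
- by rewrite nth_default in hq; rewrite ?size_Kd.
- by rewrite h nth_Kd_N in hq.
Qed.

Lemma nth_Kd_boundary sigma k p :
  nth 0 (Kdollar sigma k) p != nth 0 (Kdollar sigma k) p.+1 ->
  exists2 i, i < sigma & p.+1 = st sigma k i.
Proof.
move=> hne.
case: (ltnP p (st sigma k 0)) => hp.
  have [i hi /andP[/andP[h1 h2] /eqP h3]] := nth_Kd_lt _ _ _ hp.
  exists i => //.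
  case: (ltngtP p.+1 (st sigma k i)) => // h4.
    by rewrite h3 (@nth_Kd_block sigma k i p.+1) ?eqxx ?h4 ?(leq_trans h1) in hne.
  lia.
rewrite (@nth_default _ _ _ p.+1) in hne; last by rewrite size_Kd.
move: hne; rewrite leq_eqVlt in hp; case/orP: hp => [/eqP <-|hp].
  by rewrite nth_Kd_N eqxx.
by rewrite nth_default ?eqxx // size_Kd.
Qed.

Lemma letter_last sigma k i : (forall i, i < sigma -> 1 < k i) -> i < sigma ->
  nth 0 (Kdollar sigma k) (st sigma k i).-1 = sym i.
Proof.
move=> hk hi; apply: nth_Kd_block => //.
have := st_step sigma k i hi; have := hk i hi; lia.
Qed.

Lemma nth_rcons_lt (s : seq nat) a t : t < size s -> nth 0 (rcons s a) t = nth 0 s t.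
Proof. by move=> h; rewrite nth_rcons h. Qed.

Lemma nth_rcons_last (s : seq nat) a : nth 0 (rcons s a) (size s) = a.
Proof. by rewrite nth_rcons ltnn eqxx. Qed.

Lemma rm_const sigma k x : (forall i, i < sigma -> 1 < k i) ->
  right_maximal (Kdollar sigma k) x ->
  forall t, t.+1 < size x -> nth 0 x t = nth 0 x t.+1.
Proof.
move=> hk [a [b [hab [ha hb]]]] t ht.
apply/eqP; apply/negPn/negP => hne.
have [e1 he1 /(suffix_occ _ _ _ he1) [s1 o1]] := infix_occ _ _ ha.
have [e2 he2 /(suffix_occ _ _ _ he2) [s2 o2]] := infix_occ _ _ hb.
rewrite size_rcons in s1 o1. rewrite size_rcons in s2 o2.
set n := size x in ht s1 o1 s2 o2 *.
have l1 := o1 t ltac:(lia); have l1' := o1 t.+1 ltac:(lia).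
have l2 := o2 t ltac:(lia); have l2' := o2 t.+1 ltac:(lia).
rewrite (nth_rcons_lt _ a _ (ltnW ht)) in l1.
rewrite (nth_rcons_lt _ a _ ht) in l1'.
rewrite (nth_rcons_lt _ b _ (ltnW ht)) in l2.
rewrite (nth_rcons_lt _ b _ ht) in l2'.
rewrite addnS in l1'. rewrite addnS in l2'.
have [i1 hi1 e1i] := nth_Kd_boundary sigma k (e1 - n.+1 + t)
  ltac:(by rewrite -l1 -l1').
have [i2 hi2 e2i] := nth_Kd_boundary sigma k (e2 - n.+1 + t)
  ltac:(by rewrite -l2 -l2').
have m1 := letter_last _ _ _ hk hi1; have m2 := letter_last _ _ _ hk hi2.
rewrite -e1i /= -l1 in m1; rewrite -e2i /= -l2 in m2.
have hi : i1 = i2 by move: m1; rewrite m2 => -[].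
subst i2.
have he : e1 = e2 by lia.
subst e2.
have := o1 (size x) ltac:(lia); have := o2 (size x) ltac:(lia).
rewrite (nth_rcons_last x a) (nth_rcons_last x b) => <- hab'.
by rewrite hab' eqxx in hab.
Qed.

Lemma const_seq (x : seq nat) : (forall t, t.+1 < size x -> nth 0 x t = nth 0 x t.+1) ->
  forall t, t < size x -> nth 0 x t = nth 0 x 0.
Proof.
move=> h; elim=> [|t IH] ht //.
by rewrite -h // IH // ltnW.
Qed.

Lemma upper sigma k y : (forall i, i < sigma -> 1 < k i) ->
  right_extension (Kdollar sigma k) y ->
  exists v, (v = st sigma k 0 \/ exists2 i, i < sigma &
      (v = st sigma k i \/ v = (st sigma k i).-1)) /\
    suffix y (take v.+1 (Kdollar sigma k)).
Proof.
move=> hk [x [a [-> [hrm hin]]]].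
have [e he hsuf] := infix_occ _ _ hin.
have [s1 o1] := (suffix_occ _ _ _ he).1 hsuf.
rewrite size_rcons in s1 o1.
set n := size x in s1 o1.
have hcst := const_seq x (rm_const sigma k x hk hrm).
have la : nth 0 (Kdollar sigma k) e.-1 = a.
  have -> : e.-1 = e - n.+1 + n by lia.
  by rewrite -o1 // (nth_rcons_last x a).
rewrite size_Kd in he.
have caseA : (forall t, t < n.+1 -> nth 0 (rcons x a) t = a) ->
  exists v, (v = st sigma k 0 \/ exists2 i, i < sigma &
      (v = st sigma k i \/ v = (st sigma k i).-1)) /\
    suffix (rcons x a) (take v.+1 (Kdollar sigma k)).
  move=> hall.
  case: (ltnP e.-1 (st sigma k 0)) => hq.
    have [i hi /andP[/andP[b1 b2] /eqP b3]] := nth_Kd_lt _ _ _ hq.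
    exists (st sigma k i).-1; split; first by right; exists i => //; right.
    have hst : 0 < st sigma k i by lia.
    rewrite prednK //.
    have l0 : nth 0 (Kdollar sigma k) (e - n.+1) = sym i.
      by rewrite -(addn0 (e - n.+1)) -o1 // hall // -la b3.
    have [_ /andP[c1 c2]] := nth_Kd_letter _ _ _ _ l0.
    have hsi : st sigma k i <= size (Kdollar sigma k).
      by rewrite size_Kd; apply: leqW; apply: st_monoT.
    apply/(suffix_occ _ _ _ hsi).2.
    rewrite size_rcons -/n; split; first lia.
    move=> t ht; rewrite hall // -la b3; symmetry; apply: nth_Kd_block => //; lia.
  exists (st sigma k 0); split; first by left.
  have -> : (st sigma k 0).+1 = e by lia.
  exact: hsuf.
case: (posnP n) => hn.
  apply: caseA => t ht.
  have -> : t = size x by rewrite -/n; lia.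
  exact: nth_rcons_last.
case: (eqVneq (nth 0 x 0) a) => hx.
  apply: caseA => t ht.
  case: (ltnP t n) => htn.
    by rewrite nth_rcons_lt // hcst.
  have -> : t = size x by rewrite -/n; lia.
  exact: nth_rcons_last.
have lb : nth 0 (Kdollar sigma k) e.-2 = nth 0 x 0.
  have -> : e.-2 = e - n.+1 + n.-1 by lia.
  have hn1 : n.-1 < n by lia.
  rewrite -o1; last lia.
  by rewrite (nth_rcons_lt _ _ _ hn1) (hcst _ hn1).
have hb : nth 0 (Kdollar sigma k) e.-2 != nth 0 (Kdollar sigma k) e.-2.+1.
  have -> : e.-2.+1 = e.-1 by lia.
  by rewrite lb la.
have [i hi hei] := nth_Kd_boundary sigma k e.-2 hb.
exists (st sigma k i); split; first by right; exists i => //; left.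
have -> : (st sigma k i).+1 = e by lia.
exact: hsuf.
Qed.

Lemma block_facts sigma k i : (forall i, i < sigma -> 1 < k i) -> i < sigma ->
  let x := nseq (k i).-1 (sym i) in
  let b := nth 0 (Kdollar sigma k) (st sigma k i) in
  [/\ sym i != b, right_maximal (Kdollar sigma k) x,
      right_extension (Kdollar sigma k) (rcons x (sym i)) &
      right_extension (Kdollar sigma k) (rcons x b)].
Proof.
move=> hk hi x b.
have hki := hk i hi.
have hst := st_step sigma k i hi.
have hsi : st sigma k i <= st sigma k 0 by apply: st_monoT.
have hab : sym i != b.
  apply/eqP => hb; have [_ /andP[_]] := nth_Kd_letter _ _ _ _ (esym hb).
  by rewrite ltnn.
have hx1 : rcons x (sym i) = nseq (k i) (sym i).
  by rewrite /x -nseqSr prednK // ltnW.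
have in1 : infix (rcons x (sym i)) (Kdollar sigma k).
  have he : st sigma k i <= size (Kdollar sigma k) by rewrite size_Kd; lia.
  apply: (@occ_infix _ _ (st sigma k i)); apply/(suffix_occ _ _ _ he).2.
  rewrite hx1 size_nseq; split; first lia.
  move=> t ht; rewrite nth_nseq ht; symmetry; apply: nth_Kd_block => //; lia.
have in2 : infix (rcons x b) (Kdollar sigma k).
  have he : (st sigma k i).+1 <= size (Kdollar sigma k) by rewrite size_Kd; lia.
  apply: (@occ_infix _ _ (st sigma k i).+1); apply/(suffix_occ _ _ _ he).2.
  rewrite size_rcons size_nseq; split; first lia.
  move=> t ht; rewrite nth_rcons size_nseq.
  case: (ltnP t (k i).-1) => h1.
    rewrite nth_nseq h1; symmetry; apply: nth_Kd_block => //; lia.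
  have -> : t = (k i).-1 by lia.
  rewrite eqxx /b; congr nth; lia.
split => //.
- by exists (sym i), b.
- by exists x, (sym i); split => //; split => //; exists (sym i), b.
- by exists x, b; split => //; split => //; exists (sym i), b.
Qed.

Lemma force_last sigma k i (S : {set 'I_(size (Kdollar sigma k))}) :
  (forall i, i < sigma -> 1 < k i) -> i < sigma -> suffixient S ->
  exists2 j : 'I_(size (Kdollar sigma k)), j \in S & val j = (st sigma k i).-1.
Proof.
move=> hk hi hS.
have [_ _ hre _] := block_facts sigma k i hk hi.
have [j hj hsuf] := hS _ hre.
exists j => //.
suff: nat_of_ord j = (st sigma k i).-1 by [].
have hki := hk i hi.
have hst := st_step sigma k i hi.
have hjs : j.+1 <= size (Kdollar sigma k) by apply: ltn_ord.
have [s1 o1] := (suffix_occ _ _ _ hjs).1 hsuf.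
rewrite size_rcons size_nseq in s1 o1.
have hp : (k i).-1.+1 = k i by lia.
rewrite hp in s1 o1.
have a0 := o1 0 ltac:(lia).
have a1 := o1 (k i).-1 ltac:(lia).
rewrite nth_rcons size_nseq nth_nseq in a0.
rewrite nth_rcons size_nseq ltnn eqxx in a1.
rewrite ifT in a0; last lia.
rewrite ifT in a0; last lia.
have [_ /andP[c1 c2]] := nth_Kd_letter _ _ _ _ (esym a0).
have [_ /andP[d1 d2]] := nth_Kd_letter _ _ _ _ (esym a1).
lia.
Qed.

Lemma force_next sigma k i (S : {set 'I_(size (Kdollar sigma k))}) :
  (forall i, i < sigma -> 1 < k i) -> i < sigma -> suffixient S ->
  exists2 j : 'I_(size (Kdollar sigma k)), j \in S & val j = st sigma k i.
Proof.
move=> hk hi hS.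
have [hab _ _ hre] := block_facts sigma k i hk hi.
have [j hj hsuf] := hS _ hre.
exists j => //.
suff: nat_of_ord j = st sigma k i by [].
have hki := hk i hi.
have hst := st_step sigma k i hi.
have hjs : j.+1 <= size (Kdollar sigma k) by apply: ltn_ord.
have [s1 o1] := (suffix_occ _ _ _ hjs).1 hsuf.
rewrite size_rcons size_nseq in s1 o1.
have hp : (k i).-1.+1 = k i by lia.
rewrite hp in s1 o1.
have a0 := o1 (k i).-2 ltac:(lia).
have a1 := o1 (k i).-1 ltac:(lia).
rewrite nth_rcons size_nseq nth_nseq in a0.
rewrite nth_rcons size_nseq ltnn eqxx in a1.
rewrite ifT in a0; last lia.
rewrite ifT in a0; last lia.
have ej : j.+1 - k i + (k i).-1 = j by lia.
have ej' : j.+1 - k i + (k i).-2 = j.-1 by lia.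
rewrite ej in a1; rewrite ej' in a0.
have [_ /andP[c1 c2]] := nth_Kd_letter _ _ _ _ (esym a0).
case: (ltnP j (st sigma k i)) => hjl; last lia.
have := @nth_Kd_block sigma k i j hi ltac:(apply/andP; split; lia).
by rewrite -a1 => /esym/eqP; rewrite (negbTE hab).
Qed.

Definition hpos sigma k m :=
  if m %% 2 == 1 then (st sigma k (m %/ 2)).-1 else st sigma k (m %/ 2).

Lemma h_step sigma k m : (forall i, i < sigma -> 1 < k i) -> m.+1 < 2 * sigma ->
  hpos sigma k m.+1 < hpos sigma k m.
Proof.
move=> hk hm; rewrite /hpos.
case h1: (m %% 2 == 1).
  have -> : (m.+1 %% 2 == 1) = false by apply/negbTE/eqP; move/eqP: h1; lia.
  have -> : m.+1 %/ 2 = (m %/ 2).+1 by move/eqP: h1; lia.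
  have hi : (m %/ 2).+1 < sigma by move/eqP: h1; lia.
  have := st_step sigma k (m %/ 2) (ltnW hi); have := hk _ (ltnW hi); lia.
have -> : (m.+1 %% 2 == 1) by apply/eqP; move/negbT/eqP: h1; lia.
have -> : m.+1 %/ 2 = m %/ 2 by move/negbT/eqP: h1; lia.
have hi : m %/ 2 < sigma by move/negbT/eqP: h1; lia.
have := st_step sigma k (m %/ 2) hi; have := hk _ hi; lia.
Qed.

Lemma h_dec sigma k m m' : (forall i, i < sigma -> 1 < k i) -> m < m' -> m' < 2 * sigma ->
  hpos sigma k m' < hpos sigma k m.
Proof.
move=> hk; elim: m' => // m' IH hlt hm'.
have := h_step sigma k m' hk hm'.
rewrite ltnS leq_eqVlt in hlt; case/orP: hlt => [/eqP -> //|hlt].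
move=> h; apply: ltn_trans h (IH hlt (ltnW hm')).
Qed.

Lemma h_bound sigma k m : hpos sigma k m <= st sigma k 0.
Proof.
rewrite /hpos; have := st_monoT sigma k 0 (m %/ 2) (leq0n _).
case: ifP => _; lia.
Qed.

Lemma h_form sigma k m : m < 2 * sigma ->
  exists2 i, i < sigma & (hpos sigma k m = st sigma k i \/ hpos sigma k m = (st sigma k i).-1).
Proof.
move=> hm; exists (m %/ 2); first lia.
rewrite /hpos; case: ifP => _; [right|left]; done.
Qed.

Theorem lemma2 (sigma : nat) (k : nat -> nat) :
  1 <= sigma ->
  (forall i, i < sigma -> 1 < k i) ->
  (exists S : {set 'I_(size (Kdollar sigma k))},
      suffixient S /\ #|S| = 2 * sigma) /\
  (forall S : {set 'I_(size (Kdollar sigma k))},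
      suffixient S -> 2 * sigma <= #|S|).
Proof.
move=> hs hk.
have hp : 0 < size (Kdollar sigma k) by rewrite size_Kd.
pose x0 := Ordinal hp.
pose f := fun m : 'I_(2 * sigma) => insubd x0 (hpos sigma k m).
have hf : forall m, nat_of_ord (f m) = hpos sigma k m.
  move=> m; change (val (f m) = hpos sigma k m).
  rewrite val_insubd ifT // size_Kd ltnS; exact: h_bound.
have finj : injective f.
  move=> m1 m2 /(congr1 (@nat_of_ord _)); rewrite !hf => e.
  apply/val_inj => /=.
  case: (ltngtP m1 m2) => // hlt.
    by have := h_dec sigma k _ _ hk hlt (ltn_ord m2); rewrite e ltnn.
  by have := h_dec sigma k _ _ hk hlt (ltn_ord m1); rewrite e ltnn.
have cT : #|f @: [set: 'I_(2 * sigma)]| = 2 * sigma.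
  by rewrite card_imset // cardsT card_ord.
split.
  exists (f @: [set: 'I_(2 * sigma)]); split => //.
  move=> y hy.
  have [v [hv hsuf]] := upper sigma k y hk hy.
  have [m hm] : exists m : 'I_(2 * sigma), hpos sigma k m = v.
    case: hv => [->|[i hi [->|->]]].
    - have h0 : 0 < 2 * sigma by lia.
      by exists (Ordinal h0).
    - have h0 : 2 * i < 2 * sigma by lia.
      exists (Ordinal h0); rewrite /hpos /=.
      have -> : (2 * i) %/ 2 = i by lia.
      have -> : ((2 * i) %% 2 == 1) = false by apply/negbTE/eqP; lia.
      done.
    - have h0 : (2 * i).+1 < 2 * sigma by lia.
      exists (Ordinal h0); rewrite /hpos /=.
      have -> : (2 * i).+1 %/ 2 = i by lia.
      have -> : ((2 * i).+1 %% 2 == 1) by apply/eqP; lia.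
      done.
  exists (f m); first by apply: imset_f.
  by rewrite hf hm.
move=> S hS; rewrite -cT; apply: subset_leq_card; apply/subsetP => z /imsetP [m _ ->].
have [i hi [e|e]] := h_form sigma k m (ltn_ord m).
  have [j hj hjv] := force_next sigma k i S hk hi hS.
  suff -> : f m = j by [].
  by apply/val_inj; rewrite /= -/(nat_of_ord (f m)) hf e hjv.
have [j hj hjv] := force_last sigma k i S hk hi hS.
suff -> : f m = j by [].
by apply/val_inj; rewrite /= -/(nat_of_ord (f m)) hf e hjv.
Qed.
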